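(* Let $G$ be a finite group and let $\phi=a_1\chi_1+\cdots+a_q\chi_q$ be a real-valued virtual character of $G$, where $a_i\in\mathbb{R}$ and $\chi_i$ are irreducible complex characters of $G$ with $n_i=\chi_i(1)$. Then for every $g\in G$, $$\mathbb{E}(\xi_{g,\phi})=\sum_{i=1}^q\frac{a_i}{n_i^2}\chi_i(g),$$ and if $\phi$ is real-valued and non-negative, then for every $g\in G$, $$c(g)\le\frac{\mathbb{E}(\xi_{g,\phi})}{\phi(1)}=\frac{(a_1/n_1^2)\chi_1(g)+\cdots+(a_q/n_q^2)\chi_q(g)}{a_1n_1+\cdots+a_qn_q}.$$
   Context: $G$ is a finite group of order $m$; $G\times G$ carries the uniform probability measure and $\mathbb{E}$ is expectation with respect to it. $c(g)=|\{(x,y)\in G\times G:[x,y]=g\}|/|G|^2$. For $g\in G$, $\xi_{g,\phi}(a,b)=\mathrm{Re}\big(\phi([a,b]^{-1}g)\big)$ for $(a,b)\in G\times G$. A virtual character $\phi=\sum_{\chi\in\mathrm{Irr}(G)}a_\chi\chi$ is non-negative if (a) $\mathrm{Re}(\phi(h))\ge0$ for all $h\in G$, and (b) all $a_\chi$ are non-negative reals, not all zero. *)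

(* Defs.v *)
From HB Require Import structures.
From mathcomp Require Import all_boot all_order all_algebra all_fingroup all_solvable all_field all_character.
Set Implicit Arguments. Unset Strict Implicit. Unset Printing Implicit Defensive.
Import Order.TTheory GRing.Theory Num.Theory.
Local Open Scope ring_scope.

Definition vchar (gT : finGroupType) (G : {group gT}) (a : Iirr G -> algC)
  : 'CF(G) := \sum_i a i *: 'chi_i.

(* Expectation w.r.t. the uniform probability measure on G x G. *)
Definition Exp (gT : finGroupType) (G : {group gT}) (f : gT * gT -> algC) : algC :=
  (\sum_(p in setX G G) f p) / (#|G| ^ 2)%:R.

Definition xi (gT : finGroupType) (G : {group gT}) (phi : 'CF(G)) (g : gT)
  (p : gT * gT) : algC := 'Re (phi ([~ p.1, p.2]^-1 * g)%g).

Definition cfreq (gT : finGroupType) (G : {group gT}) (g : gT) : algC :=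
  #|[set p in setX G G | ([~ p.1, p.2] == g)%g]|%:R / (#|G| ^ 2)%:R.

Definition nonneg_vchar (gT : finGroupType) (G : {group gT}) (a : Iirr G -> algC) : Prop :=
  (forall h, h \in G -> 0 <= 'Re (vchar a h)) /\
  (forall i, 0 <= a i) /\ (exists i, a i != 0).

(* Main.v *)
Require Import Defs.
From HB Require Import structures.
From mathcomp Require Import all_boot all_order all_algebra all_fingroup all_solvable all_field all_character.
From mathcomp Require Import ring.
Import Order.TTheory GRing.Theory Num.Theory.
Local Open Scope ring_scope.

Section Key.
Variables (gT : finGroupType) (G : {group gT}).

Definition convf (i : Iirr G) (a : gT) (b : gT) : algC :=
  if b \in G then \sum_(y in G) 'chi_i (a ^ y * b)%g else 0.

Lemma convf_class i a : a \in G -> is_class_fun <<G>>%g (finfun (convf i a)).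
Proof.
move=> Ga; rewrite genGid; apply: intro_class_fun => [b z Gb Gz | b nGb].
  rewrite /convf groupJ // Gb.
  rewrite (reindex_inj (mulIg z)) /=; apply: eq_big => [y | y Gy].
    by rewrite groupMr.
  by rewrite conjgM -conjMg cfunJ.
by rewrite /convf (negPf nGb).
Qed.

Definition convcf i {a} (Ga : a \in G) : 'CF(G) := Cfun 0 (convf_class i a Ga).

Lemma convcfE i a (Ga : a \in G) b : convcf i Ga b = convf i a b.
Proof. exact: cfunE. Qed.

Lemma irr_comm j x b : b \in G -> 'chi[G]_j (x * b)%g = 'chi_j (b * x)%g.
Proof.
move=> Gb; rewrite -(cfunJ _ (x * b)%g (groupVr Gb)) conjgE invgK !mulgA.
by rewrite mulgK.
Qed.

Lemma cfdot_convcf i a (Ga : a \in G) j :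
  '[convcf i Ga, 'chi_j] = (i == j)%:R * (#|G|%:R * ('chi_i a / 'chi_i 1%g)).
Proof.
have orth y : \sum_(x in G) 'chi_i (x * y)%g * 'chi_j x^-1%g =
    #|G|%:R * ((i == j)%:R * ('chi_i y / 'chi_i 1%g)).
  by rewrite -generalized_orthogonality_relation mulVKf ?neq0CG.
rewrite cfdotE.
under eq_bigr => b Gb do rewrite convcfE /convf Gb -irr_inv mulr_suml.
rewrite exchange_big /=.
under eq_bigr => y Gy.
  under eq_bigr => b Gb do rewrite irr_comm //.
  rewrite orth cfunJ //.
  over.
rewrite sumr_const; set n := (#|G|%:R : algC).
have E (x : algC) : x *+ #|G| = x * n by rewrite /n mulr_natr.
rewrite E [_ * n]mulrC mulKf ?neq0CG //.
by rewrite mulrCA.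
Qed.

Lemma convcf_irr i a (Ga : a \in G) :
  convcf i Ga = (#|G|%:R * ('chi_i a / 'chi_i 1%g)) *: 'chi_i.
Proof.
rewrite [LHS]cfun_sum_cfdot (bigD1 i) //= big1 ?addr0; last first.
  by move=> j nji; rewrite cfdot_convcf eq_sym (negPf nji) mul0r scale0r.
by rewrite cfdot_convcf eqxx mul1r.
Qed.

Lemma commV_mul (x y g : gT) : ([~ x, y]^-1 * g = (x^-1) ^ y * (x * g))%g.
Proof. by rewrite /commg /conjg !invMg !invgK !mulgA. Qed.

Lemma comm_sum (i : Iirr G) g : g \in G ->
  \sum_(p in setX G G) 'chi_i ([~ p.1, p.2]^-1 * g)%g =
  #|G|%:R ^+ 2 * 'chi_i g / ('chi_i 1%g) ^+ 2.
Proof.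
move=> Gg.
have orth y : \sum_(x in G) 'chi_i (x * y)%g * 'chi_i x^-1%g =
    #|G|%:R * ('chi_i y / 'chi_i 1%g).
  have := generalized_orthogonality_relation y i i.
  by rewrite eqxx mul1r => <-; rewrite mulVKf ?neq0CG.
rewrite (eq_bigl (fun p => (p.1 \in G) && (p.2 \in G))); last first.
  by move=> [x y]; rewrite in_setX.
rewrite -(pair_big (fun x => x \in G) (fun y => y \in G)
  (fun x y => 'chi_i ([~ x, y]^-1 * g)%g)) /=.
transitivity (\sum_(x in G) (#|G|%:R * ('chi_i x^-1%g / 'chi_i 1%g)) * 'chi_i (x * g)%g).
  apply: eq_bigr => x Gx.
  have Gx' : (x^-1 \in G)%g by rewrite groupV.
  have := convcfE i (x^-1)%g Gx' (x * g)%g.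
  rewrite convcf_irr cfunE /convf groupM // => ->.
  by apply: eq_bigr => y Gy; rewrite commV_mul.
transitivity (#|G|%:R / 'chi_i 1%g * \sum_(x in G) 'chi_i (x * g)%g * 'chi_i x^-1%g).
  by rewrite mulr_sumr; apply: eq_bigr => x _; ring.
rewrite orth; field; exact: irr1_neq0.
Qed.
End Key.

Lemma vcharE (gT : finGroupType) (G : {group gT}) (a : Iirr G -> algC) h :
  vchar a h = \sum_i a i * 'chi_i h.
Proof. by rewrite /vchar sum_cfunE; apply: eq_bigr => i _; rewrite cfunE. Qed.

Lemma sum_setX (gT : finGroupType) (G : {group gT}) (F : gT -> gT -> algC) :
  \sum_(p in setX G G) F p.1 p.2 = \sum_(x in G) \sum_(y in G) F x y.
Proof.
rewrite (eq_bigl (fun p => (p.1 \in G) && (p.2 \in G))); last first.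
  by move=> [x y]; rewrite in_setX.
by rewrite -(pair_big (fun x => x \in G) (fun y => y \in G) F).
Qed.

Theorem corollary1 (gT : finGroupType) (G : {group gT}) (a : Iirr G -> algC) :
  (forall i, a i \is Num.real) ->
  (forall h, h \in G -> vchar a h \is Num.real) ->
  (forall g, g \in G ->
     Exp G (xi (vchar a) g) = \sum_i a i / ('chi_i 1%g) ^+ 2 * 'chi_i g) /\
  (nonneg_vchar a -> forall g, g \in G ->
     cfreq G g <= Exp G (xi (vchar a) g) / vchar a 1%g /\
     Exp G (xi (vchar a) g) / vchar a 1%g =
       (\sum_i a i / ('chi_i 1%g) ^+ 2 * 'chi_i g) / (\sum_i a i * 'chi_i 1%g)).
Proof.
move=> Ra Rphi.
have part1 g : g \in G ->
    Exp G (xi (vchar a) g) = \sum_i a i / ('chi_i 1%g) ^+ 2 * 'chi_i g.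
  move=> Gg; rewrite /Exp /xi.
  have -> : \sum_(p in setX G G) 'Re (vchar a ([~ p.1, p.2]^-1 * g)%g) =
            \sum_(p in setX G G) vchar a ([~ p.1, p.2]^-1 * g)%g.
    apply: eq_bigr => -[x y]; rewrite in_setX => /andP[Gx Gy].
    by apply/Creal_ReP; apply: Rphi; rewrite groupM ?groupV ?groupR.
  under eq_bigr => p _ do rewrite vcharE.
  rewrite exchange_big /=.
  under eq_bigr => i _ do rewrite -mulr_sumr (@comm_sum _ _ i _ Gg).
  rewrite mulr_suml natrX; apply: eq_bigr => i _.
  by field; rewrite irr1_neq0 neq0CG.
split=> // -[Hnn [Hpos [j Hj]]] g Gg.
have phi1 : vchar a 1%g = \sum_i a i * 'chi_i 1%g by rewrite vcharE.
have phi1_gt0 : 0 < vchar a 1%g.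
  rewrite phi1 (bigD1 j) //=; apply: ltr_pwDl.
    by rewrite mulr_gt0 ?irr1_gt0 // lt_def Hj Hpos.
  by apply: sumr_ge0 => i _; rewrite mulr_ge0 ?Hpos // ltW ?irr1_gt0.
split; last by rewrite part1 // phi1.
rewrite /cfreq ler_pdivlMr // /Exp mulrAC ler_wpM2r ?invr_ge0 ?ler0n //.
set S := [set p in setX G G | [~ p.1, p.2]%g == g].
have -> : #|S|%:R * vchar a 1%g =
    \sum_(p in setX G G) (if [~ p.1, p.2]%g == g then vchar a 1%g else 0).
  rewrite -big_mkcondr /= (eq_bigl (fun p => p \in S)) ?sumr_const ?mulr_natl //.
  by move=> p; rewrite /S !inE.
apply: ler_sum => -[x y]; rewrite in_setX => /andP[Gx Gy] /=.
case: eqP => [<- | _].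
  rewrite /xi [(x, y).1]/= [(x, y).2]/= mulVg.
  by have /Creal_ReP -> := Rphi _ (group1 G).
rewrite /xi [(x, y).1]/= [(x, y).2]/=.
by apply: Hnn; rewrite groupM ?groupV ?groupR.
Qed.
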